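(* Let $N\ge 2$ and $A,B,C>0$ with $B>(N-1)C$. Let $a_N=A$, $b_N=B$, $c_N=C$ and for $2\le n\le N$ let $a_{n-1}=a_n(1+c_n/b_n)$, $b_{n-1}=b_n(1-c_n^2/b_n^2)$, $c_{n-1}=c_n(1+c_n/b_n)$. Define $$\gamma=\frac{C}{(B-(N-1)C)(B+C)},\qquad \alpha=\gamma A\Big(\frac{B}{C}+1\Big),\qquad \beta=\gamma\Big(\frac{B}{C}-(N-2)\Big).$$ Then for $1\le n\le N$, $$a_n=\frac{\alpha}{\beta+(n-1)\gamma},\qquad b_n=\frac{\beta+(n-2)\gamma}{(\beta+(n-1)\gamma)(\beta-\gamma)},\qquad c_n=\frac{\gamma}{(\beta+(n-1)\gamma)(\beta-\gamma)}.$$ *)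

(* Defs.v *)
From mathcomp Require Import all_boot all_order all_algebra.
Set Implicit Arguments. Unset Strict Implicit. Unset Printing Implicit Defensive.
Import Order.TTheory GRing.Theory Num.Theory.
Local Open Scope ring_scope.

Definition abc_step (R : realFieldType) (t : R * R * R) : R * R * R :=
  let '(a, b, c) := t in
  (a * (1 + c / b), b * (1 - c ^+ 2 / b ^+ 2), c * (1 + c / b)).

(* The triple (a_n, b_n, c_n), obtained from (a_N,b_N,c_N) = (A,B,C)
   by N - n backward steps (meaningful for n <= N). *)
Definition abc (R : realFieldType) (A B C : R) (N n : nat) : R * R * R :=
  iter (N - n) (@abc_step R) (A, B, C).

Definition seq_a (R : realFieldType) (A B C : R) N n : R := (abc A B C N n).1.1.
Definition seq_b (R : realFieldType) (A B C : R) N n : R := (abc A B C N n).1.2.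
Definition seq_c (R : realFieldType) (A B C : R) N n : R := (abc A B C N n).2.

(* Main.v *)
Require Import Defs.
From mathcomp Require Import all_boot all_order all_algebra.
From mathcomp Require Import ring lra.
Import Order.TTheory GRing.Theory Num.Theory.
Local Open Scope ring_scope.

Lemma step_gen (R : realFieldType) (al g D y : R) :
  y != 0 -> y - g != 0 -> D != 0 ->
  abc_step (al / y, (y - g) / (y * D), g / (y * D)) =
  (al / (y - g), (y - g - g) / ((y - g) * D), g / ((y - g) * D)).
Proof.
move=> y0 yg0 D0; rewrite /abc_step.
have e1 : 1 + g / (y * D) / ((y - g) / (y * D)) = y / (y - g).
  by field; rewrite y0 yg0 D0.
rewrite e1; congr (_, _, _); by field; rewrite ?y0 ?yg0 ?D0.
Qed.

Theorem proposition2p5 (R : realFieldType) (N : nat) (A B C : R) :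
  (2 <= N)%N -> 0 < A -> 0 < B -> 0 < C -> (N%:R - 1) * C < B ->
  let gamma := C / ((B - (N%:R - 1) * C) * (B + C)) in
  let alpha := gamma * A * (B / C + 1) in
  let beta := gamma * (B / C - (N%:R - 2)) in
  forall n : nat, (1 <= n <= N)%N ->
    seq_a A B C N n = alpha / (beta + (n%:R - 1) * gamma) /\
    seq_b A B C N n = (beta + (n%:R - 2) * gamma)
                        / ((beta + (n%:R - 1) * gamma) * (beta - gamma)) /\
    seq_c A B C N n = gamma / ((beta + (n%:R - 1) * gamma) * (beta - gamma)).
Proof.
move=> HN HA HB HC HBC gamma alpha beta n /andP [Hn1 HnN].
have HE : B - (N%:R - 1) * C != 0 by rewrite gt_eqF // subr_gt0.
have HBC0 : 0 < B + C by lra.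
have HC0 : C != 0 by rewrite gt_eqF.
have HBC1 : B + C != 0 by rewrite gt_eqF.
have Hg : 0 < gamma.
  by rewrite /gamma divr_gt0 // mulr_gt0 // subr_gt0.
set D := (B + C)^-1.
have HD0 : 0 < D by rewrite invr_gt0.
have HD : beta = D + gamma.
  by rewrite /beta /D /gamma; field; rewrite HE HBC1 HC0.
pose y (k : nat) := D + (N%:R - k%:R) * gamma.
have ypos : forall k, (k <= N)%N -> 0 < y k.
  move=> k hk; rewrite /y; apply: ltr_pwDl => //.
  apply: mulr_ge0; last exact: ltW.
  by rewrite subr_ge0 ler_nat.
have key : forall k, (k < N)%N ->
  iter k (@abc_step R) (A, B, C) =
  (alpha / y k, (y k - gamma) / (y k * D), gamma / (y k * D)).
  elim=> [_|k IH hk].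
    rewrite /= /y /alpha /gamma /D subr0; congr (_, _, _);
      by field; rewrite ?HE ?HBC1 ?HC0.
  rewrite iterS IH ?(ltn_trans (ltnSn k) hk) // step_gen.
  - have -> : y k - gamma = y k.+1 by rewrite /y -addn1 natrD; ring.
    by [].
  - by rewrite gt_eqF // ypos // ltnW // ltnW.
  - have -> : y k - gamma = y k.+1 by rewrite /y -addn1 natrD; ring.
    by rewrite gt_eqF // ypos // ltnW.
  - by rewrite gt_eqF.
have hk : (N - n < N)%N by rewrite ltn_subrL; apply/andP; split => //; apply: leq_trans HN.
have hn : n%:R = N%:R - (N - n)%:R :> R by rewrite natrB // opprB addrC subrK.
have Hy : beta + (n%:R - 1) * gamma = y (N - n)%N by rewrite /y -hn HD; ring.
rewrite /seq_a /seq_b /seq_c /abc key // /= Hy.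
have -> : beta + (n%:R - 2) * gamma = y (N - n)%N - gamma.
  rewrite -Hy; ring.
have -> : beta - gamma = D by rewrite HD; ring.
by [].
Qed.
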